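(* Let $x=[a_0,a_1,a_2,\ldots]$ and $y=[b_0,b_1,b_2,\ldots]$ be irrational real numbers with convergents $s_k/t_k$ and $s_k'/t_k'$ respectively, and let $k\ge 0$ be such that $a_i\equiv b_i \pmod 4$ for all $0\le i\le k$. Then $\left(\frac{s_k}{t_k}\right)=\left(\frac{s_k'}{t_k'}\right)$, i.e. the Jacobi symbol $\left(\frac{s_k}{t_k}\right)$ depends only on the residue classes of $a_0,a_1,\ldots,a_k$ in $\mathbb{Z}/4\mathbb{Z}$. If moreover $a_0\ge 0$ and $b_0\ge 0$, then also $\left(\frac{t_k}{s_k}\right)=\left(\frac{t_k'}{s_k'}\right)$.
   Context: For $x\in\mathbb{R}\setminus\mathbb{Q}$ with regular continued fraction expansion $x=[a_0,a_1,a_2,\ldots]$ ($a_0\in\mathbb{Z}$, $a_i\ge 1$ for $i\ge1$), the convergents $s_k/t_k$ are defined by $s_{-1}=1$, $s_0=a_0$, $s_k=a_ks_{k-1}+s_{k-2}$ and $t_{-1}=0$, $t_0=1$, $t_k=a_kt_{k-1}+t_{k-2}$ for $k\ge1$; note $\gcd(s_k,t_k)=1$. For an odd natural number $n$ and an integer $m$ coprime to $n$, $\left(\frac{m}{n}\right)$ is the usual Jacobi symbol (equal to $1$ when $n=1$). If $n$ is even (including $n=0$) and $\gcd(m,n)=1$, one sets $\left(\frac{m}{n}\right)=*$, where $*$ is a fixed symbol different from $\pm1$. *)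

(* Defs.v *)
From HB Require Import structures.
From mathcomp Require Import all_boot all_order all_algebra.
From mathcomp Require Import all_classical all_reals.
Set Implicit Arguments. Unset Strict Implicit. Unset Printing Implicit Defensive.
Import Order.TTheory GRing.Theory Num.Theory.
Local Open Scope ring_scope.

Fixpoint cf_rest (R : realType) (x : R) (i : nat) : R :=
  match i with
  | 0%N => x
  | i'.+1 => (cf_rest x i' - (Num.floor (cf_rest x i'))%:~R)^-1
  end.

Definition cf_digit (R : realType) (x : R) (i : nat) : int :=
  Num.floor (cf_rest x i).

(* returns (s_{k-1}, s_k), with s_{-1} = 1, s_0 = a_0 *)
Fixpoint num_pair (a : nat -> int) (k : nat) : int * int :=
  match k with
  | 0%N => (1, a 0%N)
  | k'.+1 => let: (u, v) := num_pair a k' in (v, a k'.+1 * v + u)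
  end.

(* returns (t_{k-1}, t_k), with t_{-1} = 0, t_0 = 1 *)
Fixpoint den_pair (a : nat -> int) (k : nat) : int * int :=
  match k with
  | 0%N => (0, 1)
  | k'.+1 => let: (u, v) := den_pair a k' in (v, a k'.+1 * v + u)
  end.

Definition cf_num (a : nat -> int) (k : nat) : int := (num_pair a k).2.
Definition cf_den (a : nat -> int) (k : nat) : int := (den_pair a k).2.

Inductive jsym : Type := JVal of int | JStar.

(* Legendre symbol (m/p) for an odd prime p, via Euler's criterion *)
Definition legendre (m : int) (p : nat) : int :=
  if (p%:Z %| m)%Z then 0
  else if ((m ^+ (p.-1 %/ 2)) %% p%:Z)%Z == 1 then 1 else -1.

(* (m/n): Jacobi symbol for odd natural n (product of Legendre symbols over
   the prime factorisation; = 1 for n = 1), and * for even n (incl. n = 0). *)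
Definition jacobi (m : int) (n : nat) : jsym :=
  if odd n then JVal (\prod_(p <- primes n) legendre m p ^+ logn p n)
  else JStar.

(* Main.v *)
Require Import Defs.
From HB Require Import structures.
From mathcomp Require Import all_boot all_order all_algebra all_field.
From mathcomp Require Import all_classical all_reals.
From mathcomp Require Import zify ring lra.
Import Order.TTheory GRing.Theory Num.Theory.
Set Implicit Arguments. Unset Strict Implicit.
Local Open Scope ring_scope.

Lemma modz_eq1 (z : int) (p : nat) : (1 < p)%N ->
  ((z %% p%:Z)%Z == 1) = (p%:Z %| z - 1)%Z.
Proof.
move=> p1; rewrite -eqz_mod_dvd; congr (_ == _).
by rewrite (modz_small (m := 1)) //= ltz_nat.
Qed.

Definition lgF (p : nat) (x : 'F_p) : int :=
  if x == 0 then 0 else if x ^+ (p.-1 %/ 2) == 1 then 1 else -1.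

Lemma legE p m : prime p -> legendre m p = lgF (m%:~R : 'F_p).
Proof.
move=> pp; rewrite /legendre /lgF (dvdz_pcharf (pchar_Fp pp)) modz_eq1 ?prime_gt1 //.
by rewrite (dvdz_pcharf (pchar_Fp pp)) intrB rmorphXn subr_eq0.
Qed.

Lemma Fp_expm1 p (x : 'F_p) : prime p -> x != 0 -> x ^+ p.-1 = 1.
Proof.
move=> pp x0; have := expf_card x; rewrite card_Fp // => e.
have : x ^+ (p.-1).+1 = x by rewrite prednK ?prime_gt0.
move=> e2; apply: (mulfI x0); by rewrite mulr1 -exprS.
Qed.

Lemma Fp_m1 p : prime p -> (2 < p)%N -> (-1 : 'F_p) != 1.
Proof.
move=> pp p2; apply/eqP => h.
have : (2%:R : 'F_p) == 0 by rewrite mulr2n -{1}h addNr.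
rewrite -(dvdn_pcharf (pchar_Fp pp)) => /dvdn_leq -/(_ isT).
by rewrite leqNgt p2.
Qed.

Lemma odd_prime p : prime p -> (2 < p)%N -> odd p.
Proof.
move=> pp p2; apply/negPn/negP => /(prime_oddPn pp) e.
by rewrite e in p2.
Qed.

Lemma half_pred p : odd p -> p = ((p.-1 %/ 2) * 2).+1%N.
Proof.
move=> op; have op2 : (p %% 2 = 1)%N by rewrite modn2 op.
lia.
Qed.

Lemma Fp_eul p (x : 'F_p) : prime p -> (2 < p)%N -> x != 0 ->
  (x ^+ (p.-1 %/ 2) == 1) || (x ^+ (p.-1 %/ 2) == -1).
Proof.
move=> pp p2 x0; rewrite -sqrf_eq1 -exprM.
have e : ((p.-1 %/ 2) * 2 = p.-1)%N.
  by have := half_pred (odd_prime pp p2); lia.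
by rewrite e Fp_expm1.
Qed.

Lemma half_gt0 p : (2 < p)%N -> (0 < p.-1 %/ 2)%N.
Proof. move=> p2; lia. Qed.

Lemma lgF_mul p (x y : 'F_p) : prime p -> (2 < p)%N ->
  lgF (x * y) = lgF x * lgF y.
Proof.
move=> pp p2; rewrite /lgF mulf_eq0.
case: (eqVneq x 0) => [->|x0]; first by rewrite /= mul0r.
case: (eqVneq y 0) => [->|y0]; first by rewrite orbT /= mulr0.
have m1 := Fp_m1 pp p2.
rewrite /= exprMn.
have /orP[/eqP->|/eqP->] := Fp_eul pp p2 x0;
have /orP[/eqP->|/eqP->] := Fp_eul pp p2 y0;
  rewrite ?mulr1 ?mul1r ?mulrNN ?mulr1 ?eqxx ?(negPf m1) ?mulrN1 ?mulN1r ?opprK //.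

Qed.

Lemma lgF_sign p (x : 'F_p) (mu : nat) : prime p -> (2 < p)%N ->
  x ^+ (p.-1 %/ 2) = (-1) ^+ mu -> lgF x = (-1) ^+ mu.
Proof.
move=> pp p2 e; rewrite /lgF.
have [x0|x0] := eqVneq x 0.
  move: e; rewrite x0 expr0n eqn0Ngt half_gt0 // => /esym/eqP.
  by rewrite signr_eq0.
rewrite e -signr_odd -[RHS]signr_odd; case: (odd mu); rewrite ?expr1 ?expr0 ?eqxx //.
by rewrite (negPf (Fp_m1 pp p2)).
Qed.

Lemma lgF_m1 p : prime p -> (2 < p)%N -> lgF (-1 : 'F_p) = (-1) ^+ (p.-1 %/ 2).
Proof. by move=> pp p2; apply: lgF_sign. Qed.

Definition gr (p q k : nat) := ((q * k) %% p)%N.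
Definition glarge (p q k : nat) := (p.-1 %/ 2 < gr p q k)%N.
Definition gf (p q k : nat) := if glarge p q k then (p - gr p q k)%N else gr p q k.

Lemma gr_pos p q k : prime p -> ~~ (p %| q)%N -> (0 < k < p)%N -> (0 < gr p q k)%N.
Proof.
move=> pp pq /andP[k0 kp]; rewrite /gr lt0n; apply/negP => /eqP e.
have : (p %| q * k)%N by rewrite /dvdn e.
rewrite Euclid_dvdM // (negPf pq) /= => /(dvdn_leq k0).
by rewrite leqNgt kp.
Qed.

Lemma gf_range p q k : prime p -> (2 < p)%N -> ~~ (p %| q)%N ->
  (0 < k < p)%N -> (0 < gf p q k <= p.-1 %/ 2)%N.
Proof.
move=> pp p2 pq kk; have r0 := gr_pos pp pq kk.
have rp : (gr p q k < p)%N by rewrite /gr ltn_mod prime_gt0.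
have := half_pred (odd_prime pp p2).
rewrite /gf /glarge; case: ifP => hr e; lia.
Qed.

Lemma gf_cast p q k : prime p ->
  ((gf p q k)%:R : 'F_p) = (if glarge p q k then -1 else 1) * (q * k)%:R.
Proof.
move=> pp; rewrite /gf -(Fp_nat_mod pp (q * k)) -/(gr p q k).
case: ifP => _; rewrite ?mul1r // natrB; last first.
  by rewrite /gr ltnW // ltn_mod prime_gt0.
by rewrite (pchar_Fp_0 pp) sub0r mulN1r.
Qed.

Lemma Fp_nat_inj p (a b : nat) : prime p -> (a < p)%N -> (b < p)%N ->
  (a%:R : 'F_p) = b%:R -> a = b.
Proof.
move=> pp ap bp /(congr1 (fun x : 'F_p => nat_of_ord x)) /=; rewrite !val_Fp_nat // !modn_small //.
Qed.

Lemma gf_inj p q k k' : prime p -> (2 < p)%N -> ~~ (p %| q)%N ->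
  (0 < k <= p.-1 %/ 2)%N -> (0 < k' <= p.-1 %/ 2)%N ->
  gf p q k = gf p q k' -> k = k'.
Proof.
move=> pp p2 pq kk kk' e.
have := half_pred (odd_prime pp p2) => hp.
have q0 : (q%:R : 'F_p) != 0 by rewrite -(dvdn_pcharf (pchar_Fp pp)).
have m1 := Fp_m1 pp p2.
have := congr1 (fun n => (n%:R : 'F_p)) e => /=.
rewrite !gf_cast // !natrM.
have kp : (k < p)%N by lia.
have kp' : (k' < p)%N by lia.
case: (glarge p q k); case: (glarge p q k'); rewrite ?mul1r ?mulN1r.
all: first [ by move/oppr_inj/(mulfI q0)/Fp_nat_inj; apply
           | by move/(mulfI q0)/Fp_nat_inj; apply
           | move/eqP; rewrite ?eqr_oppLR -addr_eq0 -mulrDr mulf_eq0 (negPf q0) /= -natrD;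
             rewrite -(dvdn_pcharf (pchar_Fp pp)) => /(dvdn_leq _); lia ].
Qed.

Lemma gauss_perm p q : prime p -> (2 < p)%N -> ~~ (p %| q)%N ->
  perm_eq (map (gf p q) (index_iota 1 (p.-1 %/ 2).+1)) (index_iota 1 (p.-1 %/ 2).+1).
Proof.
move=> pp p2 pq; have hp := half_pred (odd_prime pp p2).
have u1 : uniq (map (gf p q) (index_iota 1 (p.-1 %/ 2).+1)).
  rewrite map_inj_in_uniq ?iota_uniq // => k k'; rewrite !mem_index_iota => kk kk'.
  by apply: gf_inj.
have sub : {subset map (gf p q) (index_iota 1 (p.-1 %/ 2).+1)
   <= index_iota 1 (p.-1 %/ 2).+1}.
  move=> x /mapP [k]; rewrite !mem_index_iota => kk ->.
  have := gf_range pp p2 pq (k := k); lia.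
have [|_ eqi] := uniq_min_size u1 sub; first by rewrite size_map.
by apply: uniq_perm => //; apply: iota_uniq.
Qed.

Lemma sign_prod (R : pzRingType) (P : pred nat) (s : seq nat) :
  \prod_(k <- s) (if P k then -1 else 1 : R) = (-1) ^+ count P s.
Proof.
elim: s => [|a s IH]; first by rewrite big_nil.
by rewrite big_cons IH /=; case: (P a); rewrite ?mul1r // exprS.
Qed.

Lemma gauss p q : prime p -> (2 < p)%N -> ~~ (p %| q)%N ->
  (q%:R : 'F_p) ^+ (p.-1 %/ 2) =
    (-1) ^+ count (glarge p q) (index_iota 1 (p.-1 %/ 2).+1).
Proof.
move=> pp p2 pq; have hp := half_pred (odd_prime pp p2).
set h := (p.-1 %/ 2)%N in hp *.
have e1 : \prod_(1 <= k < h.+1) ((gf p q k)%:R : 'F_p) = \prod_(1 <= k < h.+1) k%:R.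
  rewrite -(big_map (gf p q) xpredT (fun k => (k%:R : 'F_p))).
  by apply: perm_big; apply: gauss_perm.
have P0 : \prod_(1 <= k < h.+1) (k%:R : 'F_p) != 0.
  rewrite prodf_seq_neq0; apply/allP => k; rewrite mem_index_iota => kk /=.
  rewrite -(dvdn_pcharf (pchar_Fp pp)); apply/negP => /(dvdn_leq _); lia.
move: e1; rewrite big_seq_cond.
under eq_bigr => k /andP[kk _] do rewrite gf_cast //.
rewrite -big_seq_cond big_split /= sign_prod.
under eq_bigr => k _ do rewrite natrM.
rewrite big_split /= prodr_const_nat subn1 /= mulrA.
rewrite -{2}[\prod_(1 <= k < h.+1) (k%:R : 'F_p)]mul1r => /(mulIf P0) e.
by rewrite -[LHS](signrMK (count (glarge p q) (index_iota 1 h.+1))) e mulr1.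
Qed.

Lemma par_gf p q (s : seq nat) : odd p ->
  odd (\sum_(k <- s) gf p q k) =
    odd (\sum_(k <- s) gr p q k) (+) odd (count (glarge p q) s).
Proof.
move=> op; have p0 : (0 < p)%N by case: p op.
elim: s => [|a s IH]; first by rewrite !big_nil.
rewrite !big_cons /= !oddD IH /gf.
case: (glarge p q a); rewrite ?oddB ?op //; try by rewrite ltnW // ltn_mod.
all: by case: (odd (gr p q a)); case: (odd (\sum_(k <- s) gr p q k));
  case: (odd (count (glarge p q) s)).
Qed.

Lemma eisenstein p q : prime p -> (2 < p)%N -> ~~ (p %| q)%N -> odd q ->
  odd (count (glarge p q) (index_iota 1 (p.-1 %/ 2).+1)) =
  odd (\sum_(1 <= k < (p.-1 %/ 2).+1) (q * k) %/ p)%N.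
Proof.
move=> pp p2 pq oq; have op := odd_prime pp p2.
set s := index_iota 1 (p.-1 %/ 2).+1.
have e1 : \sum_(k <- s) gf p q k = \sum_(k <- s) k.
  rewrite -(big_map (gf p q) xpredT (fun k => k)).
  by apply: perm_big; apply: gauss_perm.
have e2 : (\sum_(k <- s) q * k = p * \sum_(k <- s) (q * k) %/ p + \sum_(k <- s) gr p q k)%N.
  rewrite big_distrr -big_split /=; apply: eq_bigr => k _.
  by rewrite /gr {1}(divn_eq (q * k) p) mulnC.
have e3 : odd (\sum_(k <- s) q * k)%N = odd (\sum_(k <- s) k)%N.
  by rewrite -big_distrr oddM oq.
have := par_gf q s op; rewrite e1 -e3 e2 oddD oddM op /=.
by case: (odd (\sum_(k <- s) gr p q k)); case: (odd (\sum_(k <- s) (q * k) %/ p)%N);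
  case: (odd (count (glarge p q) s)).
Qed.

Local Open Scope nat_scope.

Lemma cnt_le (M m : nat) : \sum_(1 <= l < M.+1) (l <= m) = minn M m.
Proof.
elim: M => [|M IH]; first by rewrite big_geq // min0n.
rewrite big_nat_recr //= IH; case: (leqP M.+1 m) => h /=; lia.
Qed.

Lemma floor_cnt p q k h' : 0 < p -> (q * k) %/ p <= h' ->
  (q * k) %/ p = \sum_(1 <= l < h'.+1) (l * p <= q * k).
Proof.
move=> p0 b; under eq_bigr => l _ do rewrite -leq_divRL //.
by rewrite cnt_le; lia.
Qed.

Lemma lattice p q : prime p -> prime q -> 2 < p -> 2 < q -> p != q ->
  \sum_(1 <= k < (p.-1 %/ 2).+1) (q * k) %/ p +
  \sum_(1 <= l < (q.-1 %/ 2).+1) (p * l) %/ q = (p.-1 %/ 2) * (q.-1 %/ 2).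
Proof.
move=> pp pq p2 q2 pnq.
have hp := half_pred (odd_prime pp p2); have hq := half_pred (odd_prime pq q2).
set h := p.-1 %/ 2 in hp *; set h' := q.-1 %/ 2 in hq *.
have p0 := prime_gt0 pp; have q0 := prime_gt0 pq.
have e1 : \sum_(1 <= k < h.+1) (q * k) %/ p =
          \sum_(1 <= k < h.+1) \sum_(1 <= l < h'.+1) (l * p <= q * k).
  rewrite big_seq_cond [RHS]big_seq_cond; apply: eq_bigr => k.
  rewrite mem_index_iota andbT => kk; apply: floor_cnt => //.
  rewrite -ltnS ltn_divLR //.
  have : q * k <= q * h by rewrite leq_mul2l; lia.
  lia.
have e2 : \sum_(1 <= l < h'.+1) (p * l) %/ q =
          \sum_(1 <= l < h'.+1) \sum_(1 <= k < h.+1) ~~ (l * p <= q * k).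
  rewrite big_seq_cond [RHS]big_seq_cond; apply: eq_bigr => l.
  rewrite mem_index_iota andbT => ll; rewrite (floor_cnt (h' := h)) //; last first.
    rewrite -ltnS ltn_divLR //.
    have : p * l <= p * h' by rewrite leq_mul2l; lia.
    lia.
  rewrite big_seq_cond [RHS]big_seq_cond; apply: eq_bigr => k.
  rewrite mem_index_iota andbT => kk; rewrite -ltnNge ltn_neqAle mulnC [p * l]mulnC.
  suff -> : (q * k != l * p) by [].
  apply/negP => /eqP e.
  have : p %| q * k by rewrite e dvdn_mull.
  rewrite Euclid_dvdM // => /orP[|/(dvdn_leq _) ]; last by move=> /(_ _); lia.
  by rewrite dvdn_prime2 // (negPf pnq).
rewrite e1 e2 (exchange_big_nat _ 1 h'.+1 1 h.+1) -big_split /=.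
rewrite (eq_bigr (fun _ => h')); first by rewrite sum_nat_const_nat subn1.
move=> k _; rewrite -big_split /=.
rewrite (eq_bigr (fun _ => 1)); first by rewrite sum_nat_const_nat subn1 muln1.
by move=> l _; case: (l * p <= q * k).
Qed.

Local Open Scope ring_scope.

Lemma intr_natz (R : pzRingType) (n : nat) : ((n%:Z)%:~R : R) = n%:R.
Proof. by []. Qed.

Lemma leg_floor p q : prime p -> (2 < p)%N -> ~~ (p %| q)%N -> odd q ->
  legendre q%:Z p = (-1) ^+ (\sum_(1 <= k < (p.-1 %/ 2).+1) (q * k) %/ p)%N.
Proof.
move=> pp p2 pq oq; rewrite legE // intr_natz (lgF_sign pp p2 (gauss pp p2 pq)).
by rewrite -signr_odd eisenstein // signr_odd.
Qed.

Lemma leg_QR p q : prime p -> prime q -> (2 < p)%N -> (2 < q)%N -> p != q ->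
  legendre q%:Z p * legendre p%:Z q = (-1) ^+ ((p.-1 %/ 2) * (q.-1 %/ 2))%N.
Proof.
move=> pp pq p2 q2 pnq.
have npq : ~~ (p %| q)%N by rewrite dvdn_prime2.
have nqp : ~~ (q %| p)%N by rewrite dvdn_prime2 // eq_sym.
rewrite leg_floor ?leg_floor ?odd_prime // -exprD lattice //.
Qed.

Lemma leg_m1 p : prime p -> (2 < p)%N -> legendre (-1) p = (-1) ^+ (p.-1 %/ 2).
Proof. by move=> pp p2; rewrite legE // intrN lgF_m1. Qed.

Lemma leg_mul p m1 m2 : prime p -> (2 < p)%N ->
  legendre (m1 * m2) p = legendre m1 p * legendre m2 p.
Proof. by move=> pp p2; rewrite !legE // intrM lgF_mul. Qed.

Lemma leg_per p m c : prime p -> legendre (m + c * p%:Z) p = legendre m p.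
Proof.
move=> pp; rewrite !legE // intrD intrM intr_natz (pchar_Fp_0 pp) mulr0 addr0 //.
Qed.

Lemma leg_1 p : prime p -> legendre 1 p = 1.
Proof. by move=> pp; rewrite legE // /lgF oner_eq0 expr1n eqxx. Qed.

Lemma leg_pm1 p m : prime p -> ~~ (p%:Z %| m)%Z ->
  (legendre m p = 1) \/ (legendre m p = -1).
Proof.
move=> pp; rewrite /legendre => /negPf ->.
by case: ifP; [left|right].
Qed.

Definition jv (m : int) (n : nat) : int :=
  \prod_(p <- primes n) legendre m p ^+ logn p n.

Lemma jacobiE m n : jacobi m n = if odd n then JVal (jv m n) else JStar.
Proof. by []. Qed.

Lemma jv_range m n N : (0 < n)%N -> (n < N)%N ->
  jv m n = \prod_(0 <= p < N) legendre m p ^+ logn p n.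
Proof.
move=> n0 nN; rewrite /jv -(filter_pi_of nN) big_filter big_mkcond /=.
apply: eq_bigr => p _; case: ifP => //= hp.
suff -> : logn p n = 0%N by rewrite expr0.
by apply/eqP; rewrite -leqn0 leqNgt logn_gt0; apply/negbT.
Qed.

Lemma jv_mul_n m n1 n2 : (0 < n1)%N -> (0 < n2)%N ->
  jv m (n1 * n2) = jv m n1 * jv m n2.
Proof.
move=> h1 h2.
have h12 : (0 < n1 * n2)%N by rewrite muln_gt0 h1.
rewrite !(jv_range m _ (N := (n1 * n2).+1)) //; last first.
- by rewrite ltnS; nia.
- by rewrite ltnS; nia.
rewrite -big_split /=; apply: eq_bigr => p _.
by rewrite lognM // exprD.
Qed.

Lemma primes_odd n p : odd n -> p \in primes n -> prime p /\ (2 < p)%N.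
Proof.
move=> on; rewrite mem_primes => /and3P[pp n0 pn]; split => //.
have := prime_gt1 pp; rewrite leq_eqVlt => /orP[/eqP e|//].
by move: pn on; rewrite -e => /dvdn_odd h /h.
Qed.

Lemma jv_mul_m m1 m2 n : odd n -> jv (m1 * m2) n = jv m1 n * jv m2 n.
Proof.
move=> on; rewrite /jv -big_split /= big_seq [RHS]big_seq.
apply: eq_bigr => p /(primes_odd on) [pp p2].
by rewrite leg_mul // exprMn.
Qed.

Lemma jv_prime m p : prime p -> jv m p = legendre m p.
Proof. by move=> pp; rewrite /jv primes_prime // big_seq1 logn_prime // eqxx expr1. Qed.

Lemma jv_1 m : jv m 1 = 1.
Proof. by rewrite /jv big_nil. Qed.

Lemma jv_per m c n : jv (m + c * n%:Z) n = jv m n.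
Proof.
rewrite /jv big_seq [RHS]big_seq; apply: eq_bigr => p.
rewrite mem_primes => /and3P[pp n0 pn].
have -> : c * n%:Z = (c * (n %/ p)%N%:Z) * p%:Z by rewrite -mulrA -PoszM divnK.
by rewrite leg_per.
Qed.

Lemma odd_ind (P : nat -> Prop) : P 1%N ->
  (forall p n, prime p -> (2 < p)%N -> odd n -> P n -> P (p * n)%N) ->
  forall n, odd n -> P n.
Proof.
move=> P1 PS n; elim: n {-2}n (leqnn n) => [|N IH] n nN on.
  by move: nN on; rewrite leqn0 => /eqP->.
have [n1|n1] := leqP n 1.
  by have -> : n = 1%N by case: n n1 on nN => [|[|]].
have pp := pdiv_prime n1; have pd := pdiv_dvd n.
have p2 : (2 < pdiv n)%N.
  have := prime_gt1 pp; rewrite leq_eqVlt => /orP[/eqP e|//].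
  by move: pd on; rewrite -e => /dvdn_odd h /h.
have e : n = (pdiv n * (n %/ pdiv n))%N by rewrite mulnC divnK.
rewrite e; apply: PS => //.
  by move: on; rewrite {1}e oddM => /andP[].
apply: IH; last by move: on; rewrite {1}e oddM => /andP[].
have n0 : (0 < n)%N by lia.
have := ltn_Pdiv (prime_gt1 pp) n0; lia.
Qed.

Definition hf (n : nat) : nat := (n.-1 %/ 2)%N.

Lemma hfM a b : odd a -> odd b -> hf (a * b) = (2 * (hf a * hf b) + hf a + hf b)%N.
Proof.
move=> oa ob; rewrite /hf.
have ea := half_pred oa; have eb := half_pred ob.
set x := (a.-1 %/ 2)%N in ea *; set y := (b.-1 %/ 2)%N in eb *.
rewrite ea eb.
have -> : (((x * 2).+1 * (y * 2).+1).-1 = (2 * (x * y) + x + y) * 2)%N by nia.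
by rewrite mulnK.
Qed.

Lemma sgn_even (z : nat) : (-1) ^+ (2 * z)%N = 1 :> int.
Proof. by rewrite exprM sqrrN !expr1n. Qed.

Lemma sgn_hfM a b : odd a -> odd b ->
  (-1) ^+ hf (a * b) = (-1) ^+ hf a * (-1) ^+ hf b :> int.
Proof. by move=> oa ob; rewrite hfM // -addnA exprD sgn_even mul1r exprD. Qed.

Lemma jv_m1 n : odd n -> jv (-1) n = (-1) ^+ hf n.
Proof.
move: n; apply: odd_ind => [|p n pp p2 on IH]; first by rewrite jv_1 /hf.
rewrite jv_mul_n ?(prime_gt0 pp) ?(odd_gt0 on) //.
by rewrite jv_prime // leg_m1 // IH sgn_hfM // odd_prime.
Qed.

Lemma jv_sq m n : odd n -> coprime `|m| n -> jv m n ^+ 2 = 1.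
Proof.
move=> on; move: n on; apply: odd_ind => [_|p n pp p2 on IH]; first by rewrite jv_1 expr1n.
rewrite coprimeMr => /andP[cp cn].
rewrite jv_mul_n ?(prime_gt0 pp) ?(odd_gt0 on) //.
rewrite exprMn IH // jv_prime // mulr1.
have np : ~~ (p%:Z %| m)%Z.
  by rewrite /dvdz /= -prime_coprime // coprime_sym.
by case: (leg_pm1 pp np) => ->; rewrite ?sqrrN expr1n.
Qed.

Lemma sgn_mul_hfM c a b : odd a -> odd b ->
  (-1) ^+ (c * hf (a * b))%N = (-1) ^+ (c * hf a)%N * (-1) ^+ (c * hf b)%N :> int.
Proof.
move=> oa ob; rewrite hfM //.
have -> : (c * (2 * (hf a * hf b) + hf a + hf b) =
   2 * (c * (hf a * hf b)) + (c * hf a + c * hf b))%N by ring.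
by rewrite exprD sgn_even mul1r exprD.
Qed.

Lemma jv_1top n : jv 1 n = 1.
Proof.
rewrite /jv big_seq big1 // => p; rewrite mem_primes => /and3P[pp _ _].
by rewrite leg_1 // expr1n.
Qed.

Lemma jv_rec_p p n : prime p -> (2 < p)%N -> odd n -> coprime p n ->
  jv p%:Z n * jv n%:Z p = (-1) ^+ (hf p * hf n)%N.
Proof.
move=> pp p2 on; move: n on; apply: odd_ind => [|q n qp q2 on IH].
  by rewrite jv_1 jv_prime // leg_1 // /hf /= muln0 mulr1.
rewrite coprimeMr => /andP[cpq cpn].
have pnq : p != q by apply/eqP => e; move: cpq; rewrite prime_coprime // e dvdnn.
rewrite jv_mul_n ?(prime_gt0 qp) ?(odd_gt0 on) // PoszM jv_mul_m ?odd_prime //.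
rewrite (jv_prime _ qp) (jv_prime _ pp) mulrACA [X in X * _]mulrC.
rewrite (leg_QR pp qp) // IH //.
by rewrite sgn_mul_hfM // odd_prime.
Qed.

Lemma jv_rec m n : odd m -> odd n -> coprime m n ->
  jv m%:Z n * jv n%:Z m = (-1) ^+ (hf m * hf n)%N.
Proof.
move=> om on; move: m om; apply: odd_ind => [|p m pp p2 om IH].
  by rewrite jv_1top jv_1 /hf mul0n mulr1.
rewrite coprimeMl => /andP[cpn cmn].
rewrite jv_mul_n ?(prime_gt0 pp) ?(odd_gt0 om) // PoszM jv_mul_m //.
rewrite mulrACA jv_rec_p // IH // [(hf (p * m) * _)%N]mulnC (sgn_mul_hfM _ (odd_prime pp p2) om).
by rewrite [(hf n * hf p)%N]mulnC [(hf n * hf m)%N]mulnC.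
Qed.

Lemma hf_mod4 x y : odd x -> (x %% 4 = y %% 4)%N -> odd (hf x) = odd (hf y).
Proof.
move=> ox e; have ox2 : (x %% 2 = 1)%N by rewrite modn2 ox.
suff : (hf x %% 2 = hf y %% 2)%N.
  by rewrite !modn2; case: (odd (hf x)); case: (odd (hf y)).
rewrite /hf; lia.
Qed.

Lemma sg_mod4 x y : odd x -> (x %% 4 = y %% 4)%N -> (-1) ^+ hf x = (-1) ^+ hf y :> int.
Proof. by move=> ox e; rewrite -signr_odd (hf_mod4 ox e) signr_odd. Qed.

Lemma sg2_mod4 x y x' y' : odd x -> odd y -> (x %% 4 = x' %% 4)%N -> (y %% 4 = y' %% 4)%N ->
  (-1) ^+ (hf x * hf y)%N = (-1) ^+ (hf x' * hf y')%N :> int.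
Proof.
move=> ox oy e1 e2; rewrite -signr_odd oddM (hf_mod4 ox e1) (hf_mod4 oy e2).
by rewrite -oddM signr_odd.
Qed.

Lemma cancel_sq (x y s : int) : x * y = s -> y ^+ 2 = 1 -> x = s * y.
Proof. by move=> e y2; rewrite -e -mulrA -expr2 y2 mulr1. Qed.

Lemma jv_F3 a n : odd n -> ~~ odd a -> coprime a n ->
  jv a%:Z (n + a) = jv a%:Z n * ((-1) ^+ hf (n + a) * (-1) ^+ (hf n * hf (n + a))%N).
Proof.
move=> on ea can.
have om : odd (n + a) by rewrite oddD on (negPf ea).
have cnm : coprime n (n + a) by rewrite /coprime gcdnDl -/(coprime n a) coprime_sym.
have -> : jv a%:Z (n + a) = jv (- n%:Z) (n + a).
  by rewrite -(jv_per (- n%:Z) 1) mul1r PoszD addKr.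
rewrite -[- n%:Z]mulN1r jv_mul_m // jv_m1 //.
have e := jv_rec on om cnm.
rewrite (cancel_sq e); last by apply: jv_sq => //; rewrite coprime_sym.
have -> : jv (n + a)%N%:Z n = jv a%:Z n by rewrite -(jv_per a%:Z 1) mul1r PoszD addrC.
ring.
Qed.

Lemma jv_G a n : odd n -> coprime a n -> jv a%:Z (n + 4 * a) = jv a%:Z n.
Proof.
move=> on can.
have om : odd (n + 4 * a) by rewrite oddD on oddM.
have c2 : forall x, odd x -> jv 4 x = 1.
  move=> x ox; have -> : (4 : int) = 2 * 2 by []. 
  rewrite jv_mul_m // -expr2 jv_sq //.
  by rewrite coprime2n.
have cn4 : coprime n 4 by rewrite -[4%N]/(2 * 2)%N coprimeMr coprimen2 on.
have cnm : coprime n (n + 4 * a).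
  by rewrite /coprime gcdnDl -/(coprime n (4 * a)) coprimeMr cn4 coprime_sym.
have e4 : forall x, odd x -> jv (4 * a)%N%:Z x = jv a%:Z x.
  by move=> x ox; rewrite PoszM jv_mul_m // c2 // mul1r.
rewrite -e4 //.
have -> : jv (4 * a)%N%:Z (n + 4 * a) = jv (- n%:Z) (n + 4 * a).
  by rewrite -(jv_per (- n%:Z) 1) mul1r PoszD addKr.
rewrite -[- n%:Z]mulN1r jv_mul_m // jv_m1 //.
have e := jv_rec on om cnm.
rewrite (cancel_sq e); last by apply: jv_sq => //; rewrite coprime_sym.
have -> : jv (n + 4 * a)%N%:Z n = jv a%:Z n.
  by rewrite -e4 // -(jv_per (4 * a)%N%:Z 1) mul1r PoszD addrC.
have hm : (-1) ^+ hf (n + 4 * a) = (-1) ^+ hf n :> int.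
  by symmetry; apply: sg_mod4 => //; lia.
have hh : odd (hf (n + 4 * a)) = odd (hf n) by symmetry; apply: hf_mod4 => //; lia.
rewrite -signr_odd -[(-1) ^+ (hf n * _)%N]signr_odd oddM hh.
by case: (odd (hf n)); rewrite /= ?expr1 ?expr0 ?mulNr ?mul1r ?opprK.
Qed.

Lemma congr4 a a2 b b2 r : (a %% 4 = a2 %% 4)%N -> (b %% 4 = b2 %% 4)%N ->
  ((a + r * b) %% 4 = (a2 + r * b2) %% 4)%N.
Proof.
move=> e1 e2; by rewrite -modnDm -modnMmr e2 e1 modnMmr modnDm.
Qed.

Lemma cop_lin s t r : coprime s t -> coprime s (t + r * s).
Proof. by rewrite /coprime addnC gcdnMDl. Qed.

Lemma key_step s t s2 t2 r : ~~ odd s -> ~~ odd s2 -> odd t -> odd t2 ->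
  coprime s t -> coprime s2 t2 -> (s %% 4 = s2 %% 4)%N -> (t %% 4 = t2 %% 4)%N ->
  jv s%:Z t = jv s2%:Z t2 -> jv s%:Z (t + r * s) = jv s2%:Z (t2 + r * s2).
Proof.
move=> es es2 ot ot2 cst cst2 e1 e2 e0.
elim: r => [|r IH]; first by rewrite !mul0n !addn0.
have on : odd (t + r * s) by rewrite oddD oddM (negPf es) andbF ot.
have on2 : odd (t2 + r * s2) by rewrite oddD oddM (negPf es2) andbF ot2.
have -> : (t + r.+1 * s = (t + r * s) + s)%N by rewrite mulSn; lia.
have -> : (t2 + r.+1 * s2 = (t2 + r * s2) + s2)%N by rewrite mulSn; lia.
rewrite jv_F3 ?cop_lin // jv_F3 ?cop_lin // IH.
have m1 := congr4 r e2 e1.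
have m2 : ((t + r * s + s) %% 4 = (t2 + r * s2 + s2) %% 4)%N.
  have -> : (t + r * s + s = t + r.+1 * s)%N by rewrite mulSn; lia.
  have -> : (t2 + r * s2 + s2 = t2 + r.+1 * s2)%N by rewrite mulSn; lia.
  exact: congr4.
have on' : odd (t + r * s + s) by rewrite oddD on (negPf es).
by rewrite (sg_mod4 on' m2) (sg2_mod4 on on' m1 m2).
Qed.

Lemma key_red s t c : ~~ odd s -> odd t -> coprime s t ->
  jv s%:Z (t + c * s) = jv s%:Z (t + (c %% 4) * s).
Proof.
move=> es ot cst; rewrite {1}(divn_eq c 4).
elim: (c %/ 4)%N => [|q IH]; first by rewrite mul0n add0n.
have -> : (t + (q.+1 * 4 + c %% 4) * s = (t + (q * 4 + c %% 4) * s) + 4 * s)%N by ring.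
rewrite jv_G ?IH //.
all: first [ by apply: cop_lin | by rewrite oddD oddM (negPf es) andbF ot ].
Qed.

Lemma key_even s t s2 t2 c c2 : ~~ odd s -> ~~ odd s2 -> odd t -> odd t2 ->
  coprime s t -> coprime s2 t2 -> (s %% 4 = s2 %% 4)%N -> (t %% 4 = t2 %% 4)%N ->
  (c %% 4 = c2 %% 4)%N ->
  jv s%:Z t = jv s2%:Z t2 -> jv s%:Z (c * s + t) = jv s2%:Z (c2 * s2 + t2).
Proof.
move=> es es2 ot ot2 cst cst2 e1 e2 e3 e0.
rewrite addnC (addnC _ t2) key_red // (key_red _ es2) // e3.
exact: key_step.
Qed.

Lemma key_odd s t c : odd s -> odd (c * s + t) -> coprime s t ->
  jv s%:Z (c * s + t) = (-1) ^+ (hf s * hf (c * s + t))%N * jv t%:Z s.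
Proof.
move=> os op cst.
have csp : coprime s (c * s + t) by rewrite addnC cop_lin.
have e := jv_rec os op csp.
have e2 : jv (c * s + t)%N%:Z s = jv t%:Z s.
  by rewrite -(jv_per t%:Z c) PoszD PoszM addrC.
rewrite e2 in e.
apply: (cancel_sq e); apply: jv_sq => //; rewrite coprime_sym //.
Qed.

Lemma congr4g a a2 b b2 r r2 : (a %% 4 = a2 %% 4)%N -> (b %% 4 = b2 %% 4)%N ->
  (r %% 4 = r2 %% 4)%N -> ((a + r * b) %% 4 = (a2 + r2 * b2) %% 4)%N.
Proof.
move=> e1 e2 e3; by rewrite -modnDm -modnMm e1 e2 e3 modnMm modnDm.
Qed.

Lemma odd4 x y : (x %% 4 = y %% 4)%N -> odd x = odd y.
Proof.
move=> e; suff : (x %% 2 = y %% 2)%N.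
  by rewrite !modn2; case: (odd x); case: (odd y).
lia.
Qed.

Lemma cop_even_odd s t : coprime s t -> ~~ odd s -> odd t.
Proof.
move=> c es; apply/negPn/negP => et.
move: c; rewrite /coprime => /eqP g.
have : (2 %| gcdn s t)%N by rewrite dvdn_gcd !dvdn2 es et.
by rewrite g.
Qed.

Lemma KEY S T C S2 T2 C2 : coprime S T -> coprime S2 T2 ->
  (S %% 4 = S2 %% 4)%N -> (T %% 4 = T2 %% 4)%N -> (C %% 4 = C2 %% 4)%N ->
  jacobi S%:Z T = jacobi S2%:Z T2 -> jacobi T%:Z S = jacobi T2%:Z S2 ->
  jacobi S%:Z (C * S + T) = jacobi S2%:Z (C2 * S2 + T2).
Proof.
move=> c1 c2 e1 e2 e3 hA hB.
have eP : ((C * S + T) %% 4 = (C2 * S2 + T2) %% 4)%N.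
  by rewrite (addnC _ T) (addnC _ T2); apply: congr4g.
rewrite !jacobiE -(odd4 eP).
case: ifP => // oP; congr JVal.
have oS := odd4 e1; have oT := odd4 e2.
case: (boolP (odd S)) => os.
  have os2 : odd S2 by rewrite -oS.
  move: hB; rewrite !jacobiE -oS os => -[hB].
  have oP2 : odd (C2 * S2 + T2) by rewrite -(odd4 eP).
  by rewrite key_odd // key_odd // hB (sg2_mod4 os oP e1 eP).
have os2 : ~~ odd S2 by rewrite -oS.
have ot := cop_even_odd c1 os.
move: hA; rewrite !jacobiE -oT ot => -[hA].
by apply: key_even => //; rewrite -oT.
Qed.

Definition shift (a : nat -> int) := fun i => a i.+1.

Lemma pair_shift a k :
  num_pair a k.+1 = (a 0%N * (num_pair (shift a) k).1 + (den_pair (shift a) k).1,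
                     a 0%N * (num_pair (shift a) k).2 + (den_pair (shift a) k).2)
  /\ den_pair a k.+1 = num_pair (shift a) k.
Proof.
elim: k => [|k [IH1 IH2]].
  by rewrite /= /shift; split; congr pair; ring.
have -> : num_pair a k.+2 = let: (u, v) := num_pair a k.+1 in (v, a k.+2 * v + u) by [].
have -> : den_pair a k.+2 = let: (u, v) := den_pair a k.+1 in (v, a k.+2 * v + u) by [].
have -> : num_pair (shift a) k.+1 =
  let: (u, v) := num_pair (shift a) k in (v, shift a k.+1 * v + u) by [].
have -> : den_pair (shift a) k.+1 =
  let: (u, v) := den_pair (shift a) k in (v, shift a k.+1 * v + u) by [].
rewrite IH1 IH2.
case: (num_pair (shift a) k) => [u v]; case: (den_pair (shift a) k) => [w z] /=.
by rewrite /shift; split; congr pair; ring.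
Qed.

Lemma cf_shift a k :
  cf_num a k.+1 = a 0%N * cf_num (shift a) k + cf_den (shift a) k /\
  cf_den a k.+1 = cf_num (shift a) k.
Proof.
have [h1 h2] := pair_shift a k.
by rewrite /cf_num /cf_den h1 h2.
Qed.

Lemma pair_det a k :
  (num_pair a k).2 * (den_pair a k).1 - (num_pair a k).1 * (den_pair a k).2 = (-1) ^+ k.+1.
Proof.
elim: k => [|k IH]; first by rewrite /= mulr0 mul1r sub0r expr1.
rewrite [num_pair a k.+1]/= [den_pair a k.+1]/=.
move: IH; case: (num_pair a k) => [u v]; case: (den_pair a k) => [w z] /= IH.
rewrite exprS -IH; ring.
Qed.

Lemma cf_coprime a k : coprime `|cf_num a k| `|cf_den a k|.
Proof.
rewrite -coprimezE; apply/coprimezP.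
have e := pair_det a k.
exists ((-1) ^+ k.+1 * (den_pair a k).1, (-1) ^+ k.+1 * - (num_pair a k).1) => /=.
rewrite /cf_num /cf_den.
have -> : (-1) ^+ k.+1 * (den_pair a k).1 * (num_pair a k).2 +
   (-1) ^+ k.+1 * - (num_pair a k).1 * (den_pair a k).2 =
   (-1) ^+ k.+1 * ((num_pair a k).2 * (den_pair a k).1 - (num_pair a k).1 * (den_pair a k).2)
   by ring.
by rewrite e -expr2 -exprM mulnC exprM sqrrN !expr1n.
Qed.

Lemma pair_pos a k : (forall i, (i <= k)%N -> 0 < a i) ->
  [/\ 0 <= (num_pair a k).1, 0 < (num_pair a k).2, 0 <= (den_pair a k).1 & 0 < (den_pair a k).2].
Proof.
elim: k => [|k IH] h; first by rewrite /= ler01 ltr01 lexx h.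
have := IH (fun i hi => h i (leqW hi)).
rewrite [num_pair a k.+1]/= [den_pair a k.+1]/=.
case: (num_pair a k) => [u v]; case: (den_pair a k) => [w z] /= [u0 v0 w0 z0].
have ak := h k.+1 (leqnn _).
split; rewrite ?ltW //; apply: ltr_pwDl => //; exact: mulr_gt0.
Qed.

Lemma pair_mod a b k : (forall i, (i <= k)%N -> (4 %| a i - b i)%Z) ->
  [/\ (4 %| (num_pair a k).1 - (num_pair b k).1)%Z, (4 %| (num_pair a k).2 - (num_pair b k).2)%Z,
      (4 %| (den_pair a k).1 - (den_pair b k).1)%Z & (4 %| (den_pair a k).2 - (den_pair b k).2)%Z].
Proof.
elim: k => [|k IH] h.
  by rewrite /= !subrr dvdz0; split => //; apply: h.
have := IH (fun i hi => h i (leqW hi)).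
rewrite [num_pair a k.+1]/= [den_pair a k.+1]/= [num_pair b k.+1]/= [den_pair b k.+1]/=.
case: (num_pair a k) => [u v]; case: (den_pair a k) => [w z];
case: (num_pair b k) => [u' v']; case: (den_pair b k) => [w' z'] /= [hu hv hw hz].
have hk := h k.+1 (leqnn _).
split => //.
  have -> : a k.+1 * v + u - (b k.+1 * v' + u') =
     a k.+1 * (v - v') + (a k.+1 - b k.+1) * v' + (u - u') by ring.
  by apply: rpredD => //; apply: rpredD; [apply: dvdz_mull | apply: dvdz_mulr].
have -> : a k.+1 * z + w - (b k.+1 * z' + w') =
   a k.+1 * (z - z') + (a k.+1 - b k.+1) * z' + (w - w') by ring.
by apply: rpredD => //; apply: rpredD; [apply: dvdz_mull | apply: dvdz_mulr].
Qed.

Lemma nat_mod4 (x y : int) : 0 <= x -> 0 <= y -> (4 %| x - y)%Z ->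
  (`|x| %% 4 = `|y| %% 4)%N.
Proof.
case: x => // X _; case: y => // Y _.
rewrite -eqz_mod_dvd => /eqP; rewrite !modz_nat /= => -[].
done.
Qed.

Lemma jac_per m c n : jacobi (m + c * n%:Z) n = jacobi m n.
Proof. by rewrite !jacobiE jv_per. Qed.

Lemma jac_per' m c s : 0 <= s -> jacobi (c * s + m) `|s| = jacobi m `|s|.
Proof. by move=> h; rewrite -{1}(gez0_abs h) addrC jac_per. Qed.

Lemma MAIN k : forall a b : nat -> int,
  (forall i, (0 < i)%N -> 0 < a i) -> (forall i, (0 < i)%N -> 0 < b i) ->
  (forall i, (i <= k)%N -> (4 %| a i - b i)%Z) ->
  jacobi (cf_num a k) `|cf_den a k| = jacobi (cf_num b k) `|cf_den b k| /\
  (0 <= a 0%N -> 0 <= b 0%N ->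
   jacobi (cf_den a k) `|cf_num a k| = jacobi (cf_den b k) `|cf_num b k|).
Proof.
elim: k => [|k IH] a b ha hb hm.
  split; first by rewrite /cf_num /cf_den /= !jacobiE /= !jv_1.
  move=> a0 b0; rewrite /cf_num /cf_den /= !jacobiE.
  rewrite (odd4 (nat_mod4 a0 b0 (hm 0%N isT))).
  by case: ifP => //; rewrite !jv_1top.
have hsa : forall i, (0 < i)%N -> 0 < shift a i by move=> i _; apply: ha.
have hsb : forall i, (0 < i)%N -> 0 < shift b i by move=> i _; apply: hb.
have hsm : forall i, (i <= k)%N -> (4 %| shift a i - shift b i)%Z.
  by move=> i hi; apply: hm.
have [IH1 IH2] := IH _ _ hsa hsb hsm.
have [_ s0 _ t0] := pair_pos (k := k) (a := shift a) (fun i _ => ha i.+1 isT).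
have [_ s0' _ t0'] := pair_pos (k := k) (a := shift b) (fun i _ => hb i.+1 isT).
have [_ ms _ mt] := pair_mod hsm.
have cop := cf_coprime (shift a) k; have cop' := cf_coprime (shift b) k.
have [hn hd] := cf_shift a k; have [hn' hd'] := cf_shift b k.
rewrite hn hd hn' hd'.
have IH2' := IH2 (ltW (ha 1%N isT)) (ltW (hb 1%N isT)).
split.
  rewrite !jac_per' ?ltW //.
move=> a0 b0.
have cm := nat_mod4 a0 b0 (hm 0%N isT).
move: IH1 IH2' cop cop' ms mt s0 t0 s0' t0'.
rewrite /cf_num /cf_den.
case: (num_pair (shift a) k).2 => // S; case: (den_pair (shift a) k).2 => // T.
case: (num_pair (shift b) k).2 => // S2; case: (den_pair (shift b) k).2 => // T2.
move: cm a0 b0; case: (a 0%N) => // C; case: (b 0%N) => // C2 cm _ _.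
move=> A B c c' ms mt _ _ _ _ /=.
apply: KEY => //.
- exact: (nat_mod4 _ _ ms).
- exact: (nat_mod4 _ _ mt).
Qed.

Lemma rat_int (R : realType) (z : int) : rational (z%:~R : R).
Proof. by exists (z%:~R) => //; rewrite ratr_int. Qed.

Lemma irr_frac (R : realType) (y : R) : irrational y ->
  0 < y - (Num.floor y)%:~R < 1.
Proof.
move=> iy; apply/andP; split.
  rewrite lt_neqAle subr_ge0 floor_le andbT eq_sym subr_eq0.
  apply/eqP => e; apply: iy; rewrite e; exact: rat_int.
have h := floorD1_gt y; rewrite intrD in h; lra.
Qed.

Lemma irr_step (R : realType) (y : R) : irrational y ->
  irrational ((y - (Num.floor y)%:~R)^-1).
Proof.
move=> iy [q _ eq]; apply: iy.
exists ((Num.floor y)%:~R + q^-1) => //.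
have rv : ratr q^-1 = (ratr q)^-1 :> R := fmorphV _ q.
rewrite rmorphD /= rv eq invrK ratr_int.
by rewrite addrC subrK.
Qed.

Lemma rest_irr (R : realType) (x : R) i : irrational x -> irrational (cf_rest x i).
Proof.
move=> ix; elim: i => [//|i IH] /=.
exact: irr_step.
Qed.

Lemma digit_pos (R : realType) (x : R) i : irrational x -> 0 < cf_digit x i.+1.
Proof.
move=> ix; rewrite /cf_digit /=.
have /andP[f0 f1] := irr_frac (rest_irr (i := i) ix).
rewrite floor_gt0 invf_ge1 //.
exact: ltW.
Qed.

Unset Implicit Arguments.

Theorem theorem2 (R : realType) (x y : R) (k : nat) :
  irrational x -> irrational y ->
  (forall i : nat, (i <= k)%N ->
     (cf_digit x i = cf_digit y i %[mod 4%:Z])%Z) ->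
  jacobi (cf_num (cf_digit x) k) `|cf_den (cf_digit x) k|%N
    = jacobi (cf_num (cf_digit y) k) `|cf_den (cf_digit y) k|%N
  /\
  (0 <= cf_digit x 0%N -> 0 <= cf_digit y 0%N ->
   jacobi (cf_den (cf_digit x) k) `|cf_num (cf_digit x) k|%N
    = jacobi (cf_den (cf_digit y) k) `|cf_num (cf_digit y) k|%N).
Proof.
move=> ix iy hm; apply: MAIN.
- by case=> // i _; apply: digit_pos.
- by case=> // i _; apply: digit_pos.
- by move=> i hi; rewrite -eqz_mod_dvd; apply/eqP; apply: hm.
Qed.
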